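(* Let $K\subseteq\mathbb{R}^d$ be a convex body and $\varepsilon>0$, and suppose the width of $K$ in every direction is at least $\varepsilon$. Then for every $i \in I^{\pm}$, $\mathrm{area}(K_i) \le C\cdot \mathrm{area}(K)$, where $C$ is a constant depending only on $d$.
   Context: $d$ is a fixed dimension. $\mathrm{area}(K)$ is the surface area of $K$. For a unit vector $u$, $H^+(u)$ denotes the closed supporting halfspace of $K$ with outer normal $u$ (so $K\subseteq H^+(u)$). Let $e_1,\dots,e_d$ be the coordinate unit vectors, $e_{-j}=-e_j$, and $I^{\pm}=\{\pm1,\dots,\pm d\}$. For $i\in I^\pm$ let $V_i=\{u\in\mathbb{S}^{d-1} : \langle u,e_i\rangle \ge \langle u,e_j\rangle \text{ for all } j\in I^\pm, j\ne i\}$ and $S_i=\bigcap_{u\in V_i}H^+(u)$. Fix $i$ and call $e_i$ the upward vertical direction; let $X_i$ be the hyperplane through the origin orthogonal to $e_i$, and for a point or set $S$ let $S^{\downarrow}$ be its orthogonal projection onto $X_i$. For $\alpha\ge0$ let $K^\downarrow\oplus\alpha$ be the set of points of $X_i$ within Euclidean distance $\alpha$ of $K^\downarrow$, and $K_i^{(\alpha)}=\{x\in S_i: x^\downarrow\in K^\downarrow\oplus\alpha\}$; set $K_i=K_i^{(2\varepsilon)}$. The lower boundary of $K_i$ consists of the boundary points of $K_i$ that have a non-vertical supporting hyperplane, and $\mathrm{area}(K_i)$ denotes the surface area of this lower boundary. *)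

(* Defs.v *)
From HB Require Import structures.
From mathcomp Require Import all_boot all_order all_algebra.
From mathcomp Require Import boolp classical_sets reals constructive_ereal ereal sequences.
Set Implicit Arguments. Unset Strict Implicit. Unset Printing Implicit Defensive.
Import Order.TTheory GRing.Theory Num.Theory.
Local Open Scope classical_set_scope.
Local Open Scope ring_scope.

Section Defs.
Variables (R : realType) (d : nat).
Notation V := 'rV[R]_d.

Definition dot (x y : V) : R := \sum_(k < d) x 0 k * y 0 k.
Definition enorm (x : V) : R := Num.sqrt (dot x x).

Definition eball (x : V) (r : R) : set V := [set y | enorm (y - x) < r].
Definition einterior (A : set V) : set V :=
  [set x | exists2 r, 0 < r & eball x r `<=` A].
Definition eclosure (A : set V) : set V :=
  [set x | forall r, 0 < r -> exists2 y, A y & enorm (y - x) < r].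
Definition eboundary (A : set V) : set V := eclosure A `\` einterior A.
Definition eclosed (A : set V) : Prop := eclosure A `<=` A.
Definition ebounded (A : set V) : Prop := exists M : R, forall x, A x -> enorm x <= M.

Definition convex_set (A : set V) : Prop :=
  forall x y (t : R), A x -> A y -> 0 <= t <= 1 -> A ((1 - t) *: x + t *: y).
Definition convex_body (K : set V) : Prop :=
  [/\ convex_set K, eclosed K, ebounded K & einterior K !=set0].

Definition supp (K : set V) (u : V) : R := sup [set dot x u | x in K].
Definition width (K : set V) (u : V) : R := supp K u + supp K (- u).
Definition Hplus (K : set V) (u : V) : set V := [set x | dot x u <= supp K u].

(* I^{+-} = {+-1,...,+-d}: index (j, true) is +(j+1), (j, false) is -(j+1) *)
Definition Ipm := ('I_d * bool)%type.
Definition eI (i : Ipm) : V :=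
  \row_k (if k == i.1 then (if i.2 then 1 else -1) else 0).

Definition Vreg (i : Ipm) : set V :=
  [set u | enorm u = 1 /\ forall j : Ipm, j != i -> dot u (eI j) <= dot u (eI i)].
Definition Sreg (K : set V) (i : Ipm) : set V :=
  \bigcap_(u in Vreg i) Hplus K u.

Definition Xi (i : Ipm) : set V := [set x | dot x (eI i) = 0].
Definition proj (i : Ipm) (x : V) : V := x - dot x (eI i) *: eI i.
Definition thick_proj (K : set V) (i : Ipm) (alpha : R) : set V :=
  [set y | Xi i y /\ exists2 z, K z & enorm (y - proj i z) <= alpha].
Definition Kalpha (K : set V) (i : Ipm) (alpha : R) : set V :=
  [set x | Sreg K i x /\ thick_proj K i alpha (proj i x)].

Definition lower_boundary (A : set V) (i : Ipm) : set V :=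
  [set x | eboundary A x /\
     exists v : V, dot v (eI i) != 0 /\ forall y, A y -> dot y v <= dot x v].

(* (unnormalized) s-dimensional Hausdorff measure w.r.t. the Euclidean metric:
   H^s(A) = sup_{delta>0} inf { sum_n diam(C_n)^s : A ⊆ U_n C_n, diam C_n <= delta } *)
Definition hcover_sums (s : nat) (delta : R) (A : set V) : set \bar R :=
  [set z | exists (C : nat -> set V) (r : nat -> R),
     [/\ forall n, 0 <= r n <= delta,
         forall n x y, C n x -> C n y -> enorm (x - y) <= r n,
         A `<=` \bigcup_n C n &
         z = (\sum_(0 <= n <oo) ((r n ^+ s)%:E))%E]].
Definition hausdorff_delta (s : nat) (delta : R) (A : set V) : \bar R :=
  ereal_inf (hcover_sums s delta A).
Definition hausdorff (s : nat) (A : set V) : \bar R :=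
  ereal_sup [set hausdorff_delta s delta A | delta in [set delta : R | 0 < delta]].

Definition area (K : set V) : \bar R := hausdorff d.-1 (eboundary K).
Definition area_lower (A : set V) (i : Ipm) : \bar R :=
  hausdorff d.-1 (lower_boundary A i).
End Defs.

(* Main.v *)
Require Import Defs.
From HB Require Import structures.
From mathcomp Require Import all_boot all_order all_algebra.
From mathcomp Require Import boolp classical_sets reals constructive_ereal ereal sequences.
From mathcomp Require Import ring lra zify.
Import Order.TTheory GRing.Theory Num.Theory.
Local Open Scope classical_set_scope.
Local Open Scope ring_scope.

Section Basic.
Context {R : realType} {d : nat}.
Notation V := 'rV[R]_d.
Implicit Types x y z : V.

Lemma dotC x y : dot x y = dot y x.
Proof. by apply: eq_bigr => k _; rewrite mulrC. Qed.
Lemma dotDl x y z : dot (x + y) z = dot x z + dot y z.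
Proof. by rewrite /dot -big_split; apply: eq_bigr => k _; rewrite mxE mulrDl. Qed.
Lemma dotZl (a : R) x y : dot (a *: x) y = a * dot x y.
Proof. by rewrite /dot mulr_sumr; apply: eq_bigr => k _; rewrite mxE mulrA. Qed.
Lemma dotNl x y : dot (- x) y = - dot x y.
Proof. by rewrite -scaleN1r dotZl mulN1r. Qed.
Lemma dotBl x y z : dot (x - y) z = dot x z - dot y z.
Proof. by rewrite dotDl dotNl. Qed.
Lemma dotDr x y z : dot x (y + z) = dot x y + dot x z.
Proof. by rewrite dotC dotDl !(dotC x). Qed.
Lemma dotZr (a : R) x y : dot x (a *: y) = a * dot x y.
Proof. by rewrite dotC dotZl dotC. Qed.
Lemma dotNr x y : dot x (- y) = - dot x y.
Proof. by rewrite dotC dotNl dotC. Qed.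
Lemma dotBr x y z : dot x (y - z) = dot x y - dot x z.
Proof. by rewrite dotDr dotNr. Qed.
Lemma dot0l x : dot 0 x = 0.
Proof. by rewrite -(scale0r 0) dotZl mul0r. Qed.
Lemma dot0r x : dot x 0 = 0.
Proof. by rewrite dotC dot0l. Qed.
Lemma dot_ge0 x : 0 <= dot x x.
Proof. by apply: sumr_ge0 => k _; rewrite -expr2 sqr_ge0. Qed.
Lemma dot_eq0 x : dot x x = 0 -> x = 0.
Proof.
move=> /eqP; rewrite /dot psumr_eq0 => [/allP H|k _]; last by rewrite -expr2 sqr_ge0.
apply/rowP => k; rewrite mxE; apply/eqP; rewrite -sqrf_eq0 expr2.
exact: (implyP (H k (mem_index_enum k))).
Qed.

Lemma enorm_ge0 x : 0 <= enorm x.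
Proof. exact: sqrtr_ge0. Qed.
Lemma enorm_sq x : enorm x ^+ 2 = dot x x.
Proof. by rewrite sqr_sqrtr // dot_ge0. Qed.
Lemma enorm0 : enorm (0 : V) = 0.
Proof. by rewrite /enorm dot0l sqrtr0. Qed.
Lemma le_enorm (a : R) x : 0 <= a -> dot x x <= a ^+ 2 -> enorm x <= a.
Proof.
move=> a0 h; rewrite -(ler_pXn2r (_ : 0 < 2)%N) ?nnegrE ?enorm_ge0 //.
by rewrite enorm_sq.
Qed.
Lemma ge_enorm (a : R) x : 0 <= a -> a ^+ 2 <= dot x x -> a <= enorm x.
Proof.
move=> a0 h; rewrite -(ler_pXn2r (_ : 0 < 2)%N) ?nnegrE ?enorm_ge0 //.
by rewrite enorm_sq.
Qed.

Lemma CS x y : `|dot x y| <= enorm x * enorm y.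
Proof.
have key : dot x y ^+ 2 <= dot x x * dot y y.
  have [y0|y0] := eqVneq (dot y y) 0.
    by rewrite (@dot_eq0 y y0) dot0r dot0l mulr0 expr0n.
  have yp : 0 < dot y y by rewrite lt_neqAle eq_sym y0 dot_ge0.
  pose t := dot x y / dot y y.
  have := dot_ge0 (x - t *: y).
  rewrite !(dotBl, dotBr, dotZl, dotZr) (dotC y x) /t => h.
  move: h; set a := dot x x; set b := dot x y; set c := dot y y => h.
  have e : a - b / c * b - b / c * (b - b / c * c) = (a * c - b ^+ 2) / c.
    by field; rewrite gt_eqF.
  by move: h; rewrite e pmulr_lge0 ?invr_gt0 // subr_ge0.
rewrite -(ler_pXn2r (_ : 0 < 2)%N) ?nnegrE ?mulr_ge0 ?enorm_ge0 //.
by rewrite real_normK ?num_real // exprMn !enorm_sq.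
Qed.

Lemma dot_le x y : dot x y <= enorm x * enorm y.
Proof. exact: le_trans (ler_norm _) (CS x y). Qed.

Lemma enormD x y : enorm (x + y) <= enorm x + enorm y.
Proof.
apply: le_enorm; first by rewrite addr_ge0 ?enorm_ge0.
rewrite !(dotDl, dotDr) (dotC y x) sqrrD !enorm_sq.
have := dot_le x y; lra.
Qed.
Lemma enormZ (a : R) x : enorm (a *: x) = `|a| * enorm x.
Proof.
by rewrite /enorm dotZl dotZr mulrA -expr2 sqrtrM ?sqr_ge0 // sqrtr_sqr.
Qed.
Lemma enormN x : enorm (- x) = enorm x.
Proof. by rewrite -scaleN1r enormZ normrN1 mul1r. Qed.
Lemma enormB x y : enorm (x - y) = enorm (y - x).
Proof. by rewrite -enormN opprB. Qed.
Lemma enormBle x y : enorm (x - y) <= enorm x + enorm y.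
Proof. by apply: le_trans (enormD _ _) _; rewrite enormN. Qed.
Lemma enorm_eq0 x : enorm x = 0 -> x = 0.
Proof. by move=> h; apply: dot_eq0; rewrite -enorm_sq h expr0n. Qed.
End Basic.

Section Proj.
Context {R : realType} {d : nat}.
Notation V := 'rV[R]_d.
Implicit Types x y z w : V.

Lemma dotE x y : dot x y = (x *m y^T) 0 0.
Proof. by rewrite /dot !mxE; apply: eq_bigr => k _; rewrite mxE. Qed.

Lemma mx11_mul (m : 'M[R]_(1,1)) (u : V) : m *m u = m 0 0 *: u.
Proof. by apply/matrixP => i j; rewrite !mxE big_ord1 (ord1 i). Qed.

Definition PU {k} (U : 'M[R]_(k, d)) x : V := x - x *m U^T *m U.

Lemma PUD k (U : 'M[R]_(k, d)) x y : PU U (x + y) = PU U x + PU U y.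
Proof. by rewrite /PU !mulmxDl opprD addrACA. Qed.
Lemma PUZ k (U : 'M[R]_(k, d)) (a : R) x : PU U (a *: x) = a *: PU U x.
Proof. by rewrite /PU -!scalemxAl scalerBr. Qed.
Lemma PUN k (U : 'M[R]_(k, d)) x : PU U (- x) = - PU U x.
Proof. by rewrite -scaleN1r PUZ scaleN1r. Qed.
Lemma PUB k (U : 'M[R]_(k, d)) x y : PU U (x - y) = PU U x - PU U y.
Proof. by rewrite PUD PUN. Qed.

Section Orth.
Context {k : nat} {U : 'M[R]_(k, d)}.
Hypothesis UU : U *m U^T = 1%:M.

Lemma PU_orth x : PU U x *m U^T = 0.
Proof. by rewrite /PU mulmxBl -!mulmxA UU mulmx1 subrr. Qed.

Lemma dot_orth (q : 'rV[R]_k) w : w *m U^T = 0 -> dot (q *m U) w = 0.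
Proof.
move=> wU; rewrite dotE -mulmxA.
have -> : U *m w^T = (w *m U^T)^T by rewrite trmx_mul trmxK.
by rewrite wU trmx0 mulmx0 mxE.
Qed.

Lemma dotPU x w : w *m U^T = 0 -> dot (PU U x) w = dot x w.
Proof. by move=> wU; rewrite /PU dotBl dot_orth // subr0. Qed.

Lemma PU_id w : w *m U^T = 0 -> PU U w = w.
Proof. by move=> wU; rewrite /PU wU mul0mx subr0. Qed.

Lemma PU_le x : enorm (PU U x) <= enorm x.
Proof.
apply: le_enorm; first exact: enorm_ge0.
rewrite enorm_sq.
have e : PU U x + x *m U^T *m U = x by rewrite /PU subrK.
have h : forall p q, p *m U^T = 0 -> dot (p + q *m U) (p + q *m U)
   = dot p p + dot (q *m U) (q *m U).
  move=> p q pU; rewrite !(dotDl, dotDr) (dotC p) (dot_orth q p pU) !(addr0, add0r) //.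

have := h (PU U x) (x *m U^T) (PU_orth x); rewrite e => ->.
by rewrite lerDl dot_ge0.
Qed.

Context {u : V}.
Hypothesis uU : u *m U^T = 0.
Hypothesis uu : dot u u = 1.

Lemma col_orth : col_mx U u *m (col_mx U u)^T = 1%:M.
Proof.
rewrite tr_col_mx mul_col_row UU uU.
have -> : U *m u^T = 0 by rewrite -[U]trmxK -trmx_mul uU trmx0.
have -> : u *m u^T = 1%:M.
  by apply/matrixP => i j; rewrite (ord1 i) (ord1 j) -dotE uu !mxE.
by rewrite [RHS]scalar_mx_block.
Qed.

Lemma PU_col x : PU (col_mx U u) x = PU U x - dot x u *: u.
Proof.
rewrite /PU tr_col_mx mul_mx_row mul_row_col mx11_mul -dotE.
by rewrite opprD addrA.
Qed.

Lemma orth_col w : w *m U^T = 0 -> dot w u = 0 -> w *m (col_mx U u)^T = 0.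
Proof.
move=> wU wu; rewrite tr_col_mx mul_mx_row wU.
have -> : w *m u^T = 0 by apply/matrixP => i j; rewrite (ord1 i) (ord1 j) -dotE wu mxE.
by rewrite row_mx0.
Qed.

Lemma rank_col : (k + 1 <= d)%N.
Proof.
have := mxrankM_maxl (col_mx U u) (col_mx U u)^T.
rewrite col_orth mxrank1 => h; apply: leq_trans h _; exact: rank_leq_col.
Qed.
End Orth.
End Proj.

Section Inrad.
Context {R : realType} {d : nat}.
Notation V := 'rV[R]_d.
Variables (K : set V) (eps M : R) (x0 : V).
Hypotheses (Kc : convex_set K) (KM : forall x, K x -> enorm x <= M) (Kx0 : K x0)
  (eps0 : 0 < eps) (Kw : forall u : V, enorm u = 1 -> eps <= width K u).

Lemma has_sup_dot v : has_sup [set dot x v | x in K].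
Proof.
split; first by exists (dot x0 v), x0.
exists (M * enorm v) => _ [x Kx <-].
apply: le_trans (dot_le x v) _; apply: ler_wpM2r; [exact: enorm_ge0 | exact: KM].
Qed.

Lemma supp_ub v x : K x -> dot x v <= supp K v.
Proof. by move=> Kx; apply: sup_upper_bound (has_sup_dot v) _ _; exists x. Qed.

Lemma supp_adh v {e} : 0 < e -> exists2 x, K x & supp K v - e < dot x v.
Proof.
move=> e0; have [_ [x Kx <-] h] := sup_adherent e0 (has_sup_dot v).
by exists x.
Qed.

Lemma enorm1_dot (v : V) : enorm v = 1 -> dot v v = 1.
Proof. by move=> h; rewrite -enorm_sq h expr1n. Qed.

Lemma no_unit_case {k} {U : 'M[R]_(k, d)} :
  ~ (exists v : V, enorm v = 1 /\ v *m U^T = 0) ->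
  forall w : V, w *m U^T = 0 -> w = 0.
Proof.
move=> nov w wU; apply/eqP/negPn/negP => w0; apply: nov.
have n0 : enorm w != 0 by apply/negP => /eqP /enorm_eq0 /eqP; exact/negP.
have np : 0 < enorm w by rewrite lt_neqAle eq_sym n0 enorm_ge0.
exists ((enorm w)^-1 *: w); split.
  by rewrite enormZ ger0_norm ?invr_ge0 ?enorm_ge0 // mulVf.
by rewrite -scalemxAl wU scaler0.
Qed.

Lemma inrad m : forall k (U : 'M[R]_(k, d)), U *m U^T = 1%:M -> (d - k <= m)%N ->
  exists c : V, forall w : V, w *m U^T = 0 -> enorm w <= eps / 24 ^+ m ->
    exists2 x, K x & PU U x = c + w.
Proof.
elim: m => [|m IH] k U UU hk;
  (case: (pselect (exists v : V, enorm v = 1 /\ v *m U^T = 0)) => [[v [v1 vU]]|nov];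
  last by exists (PU U x0) => w wU _; exists x0 => //; rewrite (no_unit_case nov w wU) addr0).
  by have := rank_col UU vU (enorm1_dot v v1); lia.
pose S := [set r | exists x y, [/\ K x, K y & r = enorm (PU U (x - y))]].
have hS : has_sup S.
  split; first by exists (enorm (PU U (x0 - x0))), x0, x0.
  exists (M + M) => _ [x [y [Kx Ky ->]]].
  apply: le_trans (PU_le UU _) _; apply: le_trans (enormBle _ _) _.
  by apply: lerD; apply: KM.
have SDs x y : K x -> K y -> enorm (PU U (x - y)) <= sup S.
  by move=> Kx Ky; apply: sup_upper_bound hS _ _; exists x, y.
have Dsge : eps <= sup S.
  apply/ler_addgt0Pr => e e0.
  have e2 : 0 < e / 2 by rewrite divr_gt0.
  have [x Kx hx] := supp_adh v e2; have [y Ky hy] := supp_adh (- v) e2.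
  have := Kw v v1; rewrite /width => hw.
  have h1 : dot (x - y) v = dot x v + dot y (- v) by rewrite dotBl dotNr.
  have h2 : dot (x - y) v <= sup S.
    rewrite -(dotPU (U:=U) _ _ vU); apply: le_trans (dot_le _ _) _.
    by rewrite v1 mulr1; apply: SDs.
  lra.
have Ds0 : 0 < sup S by apply: lt_le_trans Dsge.
have q4 : 0 < sup S / 4 by rewrite divr_gt0.
have [r [b [a [Kb Ka eL]]] hL] := sup_adherent q4 hS.
move: hL; rewrite eL; clear eL r.
set D := sup S in SDs Dsge Ds0 q4 *.
set L := enorm (PU U (b - a)) => hL.
have L0 : 0 < L by lra.
pose u := L^-1 *: PU U (b - a).
have uU : u *m U^T = 0 by rewrite /u -scalemxAl PU_orth // scaler0.
have PL : PU U (b - a) = L *: u by rewrite /u scalerA mulfV ?gt_eqF // scale1r.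
have uu : dot u u = 1.
  by rewrite /u dotZl dotZr -enorm_sq -/L mulrA -expr2 -exprMn mulVf ?gt_eqF // expr1n.
have u1 : enorm u = 1 by rewrite /enorm uu sqrtr1.
have duL : dot (b - a) u = L.
  by rewrite -(dotPU _ _ uU) PL dotZl uu mulr1.
clearbody u.
have UU' := col_orth UU uU uu.
have hk' : (d - (k + 1) <= m)%N by lia.
have [c' Hc'] := IH _ _ UU' hk'.
set U' := col_mx U u in UU' Hc'.
pose A := PU U' a.
exists ((1/3) *: c' + (2/3) *: A + (dot a u + L / 2) *: u) => w wU wn.
pose s := dot w u; pose w' := w - s *: u.
have w'u : dot w' u = 0 by rewrite /w' dotBl dotZl uu mulr1 subrr.
have w'U : w' *m U^T = 0 by rewrite /w' mulmxBl -scalemxAl uU scaler0 wU subr0.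
have w'U' : (3 *: w') *m U'^T = 0.
  by rewrite -scalemxAl (orth_col _ w'U w'u) scaler0.
have ew : w = w' + s *: u by rewrite /w' subrK.
clearbody w'.
have wn' : enorm w' <= enorm w.
  apply: le_enorm; first exact: enorm_ge0.
  rewrite enorm_sq ew !(dotDl, dotDr) !(dotZl, dotZr) w'u (dotC u w') w'u uu.
  by rewrite !mulr0 !addr0 add0r lerDl mulr1 -expr2 sqr_ge0.
have sn : `|s| <= enorm w by apply: le_trans (CS _ _) _; rewrite u1 mulr1.
have p24 : 1 <= 24 ^+ m :> R by apply: exprn_ege1; rewrite ler1n.
have wle : enorm w <= eps / 24 ^+ m / 24.
  by move: wn; rewrite exprSr invfM mulrA.
have w24 : enorm w <= eps / 24.
  apply: le_trans wle _; rewrite ler_pM2r // ler_pdivrMr ?exprn_gt0 //.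
  by rewrite ler_peMr // ltW.
have [z Kz hz] : exists2 z, K z & PU U' z = c' + 3 *: w'.
  apply: Hc' => //; rewrite enormZ ger0_norm //.
  have : enorm w' <= eps / 24 ^+ m / 24 by apply: le_trans wn' wle.
  have : 0 <= eps / 24 ^+ m by rewrite divr_ge0 ?exprn_ge0 // ltW.
  lra.
pose h := dot (z - a) u.
have hup : h <= D.
  rewrite /h -(dotPU _ _ uU); apply: le_trans (dot_le _ _) _.
  by rewrite u1 mulr1; apply: SDs.
have hlo : L - D <= h.
  have : dot (b - z) u <= D.
    rewrite -(dotPU _ _ uU); apply: le_trans (dot_le _ _) _.
    by rewrite u1 mulr1; apply: SDs.
  have : dot (b - z) u = L - h by rewrite -duL /h -dotBl opprB addrA subrK.
  lra.
have sabs : - enorm w <= s <= enorm w by rewrite -ler_norml.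
pose tau := (L / 2 + s - h / 3) / (2 * L / 3).
have t0 : 0 <= tau.
  rewrite /tau divr_ge0 //; last by rewrite ltW // divr_gt0 ?mulr_gt0.
  lra.
have t1 : tau <= 1.
  rewrite /tau ler_pdivrMr ?divr_gt0 ?mulr_gt0 // mul1r; lra.
pose q := (1 - tau) *: a + tau *: b.
have Kq : K q by apply: Kc => //; rewrite t0 t1.
pose x := (1 - 2/3) *: z + (2/3) *: q.
have Kx : K x by apply: Kc => //; apply/andP; split; lra.
exists x => //.
have PUb : PU U' b = A.
  apply/eqP; rewrite -subr_eq0 -PUB PU_col PL duL subrr //.
have E1 : PU U x = PU U' x + dot x u *: u by rewrite PU_col subrK.
have E2 : PU U' x = (1/3) *: (c' + 3 *: w') + (2/3) *: A.
  rewrite /x /q !(PUD, PUZ) hz PUb -/A.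
  have -> : 1 - 2/3 = 1/3 :> R by field.
  by rewrite -scalerDl subrK scale1r.
have E3 : dot x u = dot a u + L / 2 + s.
  rewrite /x /q !(dotDl, dotZl).
  have -> : dot z u = h + dot a u by rewrite /h dotBl subrK.
  have -> : dot b u = dot a u + L by rewrite -duL dotBl addrC subrK.
  rewrite /tau; field; rewrite gt_eqF //.
rewrite E1 E2 E3 ew.
move: (c') (w') (A) (u) (dot a u) => C W AA UU0 al.
by apply/rowP => j; rewrite !mxE; field.
Qed.
End Inrad.

Section EI.
Context {R : realType} {d : nat}.
Notation V := 'rV[R]_d.
Implicit Types x y z : V.

Lemma dot_eI x (j : Ipm d) : dot x (eI R j) = if j.2 then x 0 j.1 else - x 0 j.1.
Proof.
rewrite /dot (bigD1 j.1) //= big1 => [|k /negbTE kj]; last by rewrite mxE kj mulr0.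
by rewrite addr0 mxE eqxx; case: j.2; rewrite ?mulr1 ?mulrN1.
Qed.

Variable i : Ipm d.
Notation e := (eI R i).

Lemma dot_ee : dot e e = 1.
Proof. by rewrite dot_eI mxE eqxx; case: i.2; rewrite ?opprK. Qed.
Lemma enorm_e : enorm e = 1.
Proof. by rewrite /enorm dot_ee sqrtr1. Qed.

Lemma projE x : proj i x = x - dot x e *: e.
Proof. by []. Qed.
Lemma projD x y : proj i (x + y) = proj i x + proj i y.
Proof. by rewrite !projE dotDl scalerDl opprD addrACA. Qed.
Lemma projZ (a : R) x : proj i (a *: x) = a *: proj i x.
Proof. by rewrite !projE dotZl scalerBr scalerA. Qed.
Lemma projN x : proj i (- x) = - proj i x.
Proof. by rewrite -scaleN1r projZ scaleN1r. Qed.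
Lemma projB x y : proj i (x - y) = proj i x - proj i y.
Proof. by rewrite projD projN. Qed.
Lemma proj_e : proj i e = 0.
Proof. by rewrite projE dot_ee scale1r subrr. Qed.
Lemma dot_proj_e x : dot (proj i x) e = 0.
Proof. by rewrite projE dotBl dotZl dot_ee mulr1 subrr. Qed.
Lemma proj_id x : dot x e = 0 -> proj i x = x.
Proof. by move=> h; rewrite projE h scale0r subr0. Qed.
Lemma proj_proj x : proj i (proj i x) = proj i x.
Proof. by rewrite proj_id // dot_proj_e. Qed.
Lemma proj_decomp x : x = proj i x + dot x e *: e.
Proof. by rewrite projE subrK. Qed.
Lemma proj_le x : enorm (proj i x) <= enorm x.
Proof.
apply: le_enorm; first exact: enorm_ge0.
rewrite enorm_sq {3 4}(proj_decomp x).
move: (proj i x) (dot_proj_e x) (dot x e) => p pe t.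
rewrite !(dotDl, dotDr, dotZl, dotZr) (dotC e p) pe dot_ee.
by rewrite !mulr0 !addr0 lerDl add0r mulr1 -expr2 sqr_ge0.
Qed.
End EI.

Section Vr.
Context {R : realType} {d : nat}.
Notation V := 'rV[R]_d.
Variable i : Ipm d.
Notation e := (eI R i).
Hypothesis d0 : (0 < d)%N.

Lemma Vreg_e : Vreg i e.
Proof.
split; first exact: enorm_e.
move=> j _; rewrite dot_ee; apply: le_trans (ler_norm _) _.
by apply: le_trans (CS _ _) _; rewrite !enorm_e mulr1.
Qed.

Lemma Vreg_coord {u} : Vreg i u -> forall k, `|u 0 k| <= dot u e.
Proof.
move=> [_ hu] k.
have h b : dot u (eI R (k, b)) <= dot u e.
  by have [-> //|ne] := eqVneq (k, b) i; apply: hu.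
by rewrite ler_norml; have := h true; have := h false; rewrite !dot_eI /= lerNl => -> ->.
Qed.

Lemma Vreg_a {u} : Vreg i u -> d%:R^-1 <= dot u e.
Proof.
move=> Vu; have hk := Vreg_coord Vu.
have a0 : 0 <= dot u e by apply: le_trans (hk i.1); exact: normr_ge0.
have h1 : 1 <= d%:R * dot u e ^+ 2.
  have [u1 _] := Vu.
  have -> : d%:R * dot u e ^+ 2 = \sum_(k < d) dot u e ^+ 2.
    by rewrite sumr_const card_ord mulr_natl.
  rewrite -(enorm1_dot _ u1) {1}/dot.
  apply: ler_sum => k _; rewrite -expr2 -real_normK ?num_real //.
  by rewrite lerXn2r ?nnegrE ?normr_ge0.
have dp : 0 < d%:R :> R by rewrite ltr0n.
have dge1 : 1 <= d%:R :> R by rewrite ler1n.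
rewrite -(ler_pXn2r (_ : 0 < 2)%N) ?nnegrE ?invr_ge0 ?ler0n //.
have i1 : d%:R^-1 <= 1 :> R by rewrite invf_le1.
have i2 : d%:R^-1 <= dot u e ^+ 2 by rewrite -(ler_pM2l dp) mulfV ?gt_eqF.
have i3 : d%:R^-1 ^+ 2 <= d%:R^-1 :> R.
  by rewrite expr2 ler_piMl ?invr_ge0 ?ler0n.
exact: le_trans i3 i2.
Qed.

Lemma Vreg_inv {u} : Vreg i u -> 0 < dot u e /\ (dot u e)^-1 <= d%:R.
Proof.
move=> Vu; have h := Vreg_a Vu.
have dp : 0 < d%:R :> R by rewrite ltr0n.
have ap : 0 < dot u e by apply: lt_le_trans h; rewrite invr_gt0.
split => //; rewrite -[d%:R]invrK lef_pV2 ?posrE ?invr_gt0 //.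
Qed.
End Vr.

Section Main.
Context {R : realType} {d : nat}.
Notation V := 'rV[R]_d.
Variables (K : set V) (M : R) (x0 : V) (i : Ipm d).
Hypotheses (KM : forall x, K x -> enorm x <= M) (Kx0 : K x0) (d0 : (0 < d)%N).
Notation e := (eI R i).

Definition T (y u : V) := (supp K u - dot y u) / dot u e.
Definition fgr (y : V) := inf [set T y u | u in Vreg i].

Lemma T_lb y u : Vreg i u -> - (d%:R * enorm (x0 - y)) <= T y u.
Proof.
move=> Vu; have [ap ai] := Vreg_inv i d0 Vu.
have [u1 _] := Vu.
have h1 : dot x0 u - dot y u <= supp K u - dot y u.
  by rewrite lerD2r; apply: supp_ub KM Kx0 _ _ Kx0.
have h2 : - enorm (x0 - y) <= dot x0 u - dot y u.
  rewrite -dotBl lerNl; apply: le_trans (_ : `|dot (x0 - y) u| <= _).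
    by rewrite -normrN ler_norm.
  by apply: le_trans (CS _ _) _; rewrite u1 mulr1.
rewrite /T ler_pdivlMr //.
have da : 1 <= d%:R * dot u e.
  by have := ler_wpM2r (ltW ap) ai; rewrite mulVf ?gt_eqF.
have : 0 <= enorm (x0 - y) * (d%:R * dot u e - 1) by rewrite mulr_ge0 ?enorm_ge0 // subr_ge0.
move: (enorm (x0 - y)) (d%:R) (dot u e) h1 h2 => n D a h1 h2 h3.
nra.
Qed.

Lemma has_inf_T y : has_inf [set T y u | u in Vreg i].
Proof.
split; first by exists (T y e), e => //; exact: (Vreg_e i).
by exists (- (d%:R * enorm (x0 - y))) => _ [u Vu <-]; apply: T_lb.
Qed.

Lemma f_le y u : Vreg i u -> fgr y <= T y u.
Proof. by move=> Vu; apply: ge_inf (proj2 (has_inf_T y)) _ _; exists u. Qed.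

Lemma f_ge y t : (forall u, Vreg i u -> t <= T y u) -> t <= fgr y.
Proof.
move=> h; apply: lb_le_inf; first by exists (T y e), e => //; exact: (Vreg_e i).
by move=> _ [u Vu <-]; apply: h.
Qed.

Lemma T_lip y y' u : Vreg i u -> T y u <= T y' u + d%:R * enorm (y - y').
Proof.
move=> Vu; have [ap ai] := Vreg_inv i d0 Vu; have [u1 _] := Vu.
have h : T y u - T y' u = dot (y' - y) u / dot u e.
  by rewrite /T dotBl; field; rewrite gt_eqF.
rewrite -lerBlDl h.
apply: le_trans (_ : enorm (y - y') * (dot u e)^-1 <= _); last first.
  by rewrite mulrC; apply: ler_wpM2r => //; exact: enorm_ge0.
rewrite ler_pM2r ?invr_gt0 //.
by apply: le_trans (dot_le _ _) _; rewrite u1 mulr1 enormB.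
Qed.

Lemma f_lip y y' : `|fgr y - fgr y'| <= d%:R * enorm (y - y').
Proof.
have h a b : fgr a - d%:R * enorm (a - b) <= fgr b.
  apply: f_ge => u Vu; rewrite lerBlDr.
  by apply: le_trans (f_le a _ Vu) _; apply: T_lip.
rewrite ler_norml; have := h y y'; have := h y' y; rewrite enormB; lra.
Qed.

Lemma Sreg_iff y t : Sreg K i (y + t *: e) <-> t <= fgr y.
Proof.
split => [hS|ht].
  apply: f_ge => u Vu; have [ap _] := Vreg_inv i d0 Vu.
  have := hS u Vu; rewrite /Hplus /= dotDl dotZl (dotC e u) => h.
  by rewrite /T ler_pdivlMr // lerBrDl.
move=> u Vu; have [ap _] := Vreg_inv i d0 Vu.
have := le_trans ht (f_le y _ Vu); rewrite /T ler_pdivlMr // lerBrDl => h.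
by rewrite /Hplus /= dotDl dotZl (dotC e u).
Qed.

Lemma Kalpha_up (al : R) xr s : Kalpha K i al xr -> dot xr e + s <= fgr (proj i xr) ->
  Kalpha K i al (xr + s *: e).
Proof.
move=> [_ th] hs; split.
  by rewrite {1}(proj_decomp i xr) -addrA -scalerDl; apply/Sreg_iff.
by rewrite projD projZ proj_e scaler0 addr0.
Qed.

Lemma Kalpha_le (al : R) xr : Kalpha K i al xr -> dot xr e <= fgr (proj i xr).
Proof. by move=> [hS _]; apply/Sreg_iff; rewrite -proj_decomp. Qed.

Lemma LB_graph (al : R) x : lower_boundary (Kalpha K i al) i x ->
  x = proj i x + fgr (proj i x) *: e /\
  (forall r, 0 < r -> exists2 z, K z & enorm (proj i x - proj i z) <= al + r).
Proof.
move=> [[xcl _] [v [ve hv]]].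
split; last first.
  move=> r r0; have [xr [_ [_ [z Kz hz]]] hr] := xcl r r0.
  exists z => //; rewrite -[proj i x](subrK (proj i xr)) -addrA.
  apply: le_trans (enormD _ _) _; rewrite (addrC al); apply: lerD => //.
  by rewrite -projB; apply: le_trans (proj_le _ _) _; rewrite enormB ltW.
set y := proj i x; set t := dot x e.
have ex : x = y + t *: e by exact: proj_decomp.
have tf : t <= fgr y.
  apply/Sreg_iff; rewrite -ex => u Vu; rewrite /Hplus /=.
  apply/ler_addgt0Pr => r r0; have [xr [hS _] hr] := xcl r r0.
  have h1 := hS u Vu; rewrite /Hplus /= in h1.
  have [u1 _] := Vu.
  have : dot (x - xr) u <= r.
    apply: le_trans (dot_le _ _) _; rewrite u1 mulr1 enormB; exact: ltW.
  rewrite dotBl; lra.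
set be := dot e v.
have be0 : be != 0 by rewrite /be dotC.
have [x1 K1 _] := xcl 1 ltr01.
have bep : 0 < be.
  rewrite lt_neqAle eq_sym be0 /=; rewrite leNgt; apply/negP => bn.
  pose s := - ((`|dot x v - dot x1 v| + 1) / (- be)).
  have s0 : s <= 0 by rewrite /s oppr_le0 divr_ge0 // ?addr_ge0 // ltW // oppr_gt0.
  have hs : dot x1 e + s <= fgr (proj i x1) by have := Kalpha_le _ _ K1; lra.
  have := hv _ (Kalpha_up _ _ _ K1 hs).
  rewrite dotDl dotZl -/be.
  have -> : s * be = `|dot x v - dot x1 v| + 1 by rewrite /s; field.
  move=> h; have : dot x v - dot x1 v <= `|dot x v - dot x1 v| by exact: ler_norm.
  by lra.
suff : (fgr y - t) * be <= 0.
  rewrite pmulr_lle0 // subr_le0 => ft.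
  by rewrite {1}ex; congr (_ + _ *: _); apply/le_anti; rewrite tf ft.
pose c0 := enorm v + (d%:R + 1) * be.
have c0p : 0 < c0 by rewrite /c0 ltr_wpDl ?enorm_ge0 // mulr_gt0 // ltr_wpDl.
apply/ler_addgt0Pr => eta eta0; rewrite add0r.
have rp : 0 < eta / c0 by rewrite divr_gt0.
have [xr Kr hr] := xcl _ rp.
have hs : dot xr e + (fgr (proj i xr) - dot xr e) <= fgr (proj i xr) by rewrite addrC subrK.
have := hv _ (Kalpha_up _ _ _ Kr hs).
rewrite dotDl dotZl -/be => hmain.
have h1 : dot x v - dot xr v <= eta / c0 * enorm v.
  rewrite -dotBl; apply: le_trans (dot_le _ _) _; rewrite enormB.
  by apply: ler_wpM2r; [exact: enorm_ge0 | exact: ltW].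
have h2 : dot xr e <= t + eta / c0.
  rewrite -lerBlDl -dotBl; apply: le_trans (dot_le _ _) _.
  by rewrite enorm_e mulr1 ltW.
have h3 : fgr y - d%:R * (eta / c0) <= fgr (proj i xr).
  have := f_lip y (proj i xr); rewrite ler_norml => /andP[_ hh].
  have : enorm (y - proj i xr) <= eta / c0.
    by rewrite /y -projB; apply: le_trans (proj_le _ _) _; rewrite enormB ltW.
  move=> hy; have := ler_wpM2l (ler0n R d) hy; lra.
have e3 : eta = eta / c0 * (enorm v + (d%:R + 1) * be) by rewrite divfK ?gt_eqF.
rewrite {1}e3.
move: (eta / c0) (fgr y) (fgr (proj i xr)) (dot xr e) (dot x v) (dot xr v) (enorm v) (d%:R : R)
  hmain h1 h2 h3 bep tf => r F Fr a X Xr nv D hmain h1 h2 h3 bep tf.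
have hA : (F - D * r - a) * be <= (Fr - a) * be by rewrite ler_pM2r //; lra.
have hB : (a - t) * be <= r * be by rewrite ler_pM2r //; lra.
have e4 : (F - t) * be = (F - D * r - a) * be + (a - t) * be + D * r * be by ring.
rewrite e4; lra.
Qed.
End Main.

Section Final.
Context {R : realType} {d : nat}.
Notation V := 'rV[R]_d.

Lemma top_point (K : set V) (M : R) (i : Ipm d) k :
  (forall x, K x -> enorm x <= M) -> K k ->
  exists b, eboundary K b /\ proj i b = proj i k.
Proof.
move=> KM Kk; pose T := [set t : R | K (k + t *: eI R i)].
have hT : has_sup T.
  split; first by exists 0; rewrite /T /= scale0r addr0.
  exists (M - dot k (eI R i)) => t Tt; rewrite lerBrDl.
  have := KM _ Tt; have := dot_le (k + t *: eI R i) (eI R i).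
  by rewrite enorm_e mulr1 dotDl dotZl dot_ee mulr1; lra.
have ub := sup_upper_bound hT.
exists (k + sup T *: eI R i); split; last by rewrite projD projZ proj_e scaler0 addr0.
split.
  move=> r r0; have [t Tt ht] := sup_adherent r0 hT.
  exists (k + t *: eI R i) => //.
  rewrite opprD addrACA subrr add0r -scalerBl enormZ enorm_e mulr1.
  have tl := ub t Tt; rewrite ler0_norm ?subr_le0 //; lra.
move=> [r r0 hb].
have hin : eball (k + sup T *: eI R i) r (k + sup T *: eI R i + (r / 2) *: eI R i).
  rewrite /eball /= addrAC subrr add0r enormZ enorm_e mulr1 ger0_norm ?divr_ge0 ?ltW //.
  lra.
have : T (sup T + r / 2) by have := hb _ hin; rewrite -addrA -scalerDl.
move=> /ub; lra.
Qed.

Lemma inball (K : set V) (eps M : R) x0 :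
  convex_set K -> (forall x, K x -> enorm x <= M) -> K x0 -> 0 < eps ->
  (forall u : V, enorm u = 1 -> eps <= width K u) ->
  exists c, forall w, enorm w <= eps / 24 ^+ d -> K (c + w).
Proof.
move=> Kc KM Kx0 eps0 Kw.
have U0 : (0 : 'M[R]_(0, d)) *m 0^T = 1%:M by apply/matrixP => -[].
have [c hc] := @inrad _ _ _ _ _ _ Kc KM Kx0 eps0 Kw d _ _ U0 (leq_subr 0 d).
exists c => w hw.
have w0 : w *m (0 : 'M[R]_(0, d))^T = 0 by rewrite trmx0 mulmx0.
have [x Kx] := hc w w0 hw.
by rewrite /PU trmx0 !mulmx0 subr0 => <-.
Qed.

Lemma hom (K : set V) (eps : R) (i : Ipm d) c z y :
  convex_set K -> 0 < eps ->
  (forall w, enorm w <= eps / 24 ^+ d -> K (c + w)) ->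
  K z -> dot y (eI R i) = 0 -> enorm (y - proj i z) <= 3 * eps ->
  exists2 k', K k' & y = proj i c + (1 + 3 * 24 ^+ d) *: (proj i k' - proj i c).
Proof.
move=> Kc eps0 hball Kz ye hyz.
have Np : 0 < 24 ^+ d :> R by rewrite exprn_gt0.
move: (24 ^+ d) Np hball => N Np hball.
pose lam := 1 + 3 * N; pose mu := lam^-1.
have lam1 : 1 <= lam by rewrite /lam lerDl mulr_ge0 // ltW.
have lam0 : 0 < lam by apply: lt_le_trans lam1.
have mu0 : 0 < mu by rewrite invr_gt0.
have mu1 : mu <= 1 by rewrite invf_le1.
pose w := (3 * N)^-1 *: (y - proj i z).
have Kw : K (c + w).
  apply: hball; rewrite enormZ ger0_norm; last by rewrite invr_ge0 mulr_ge0 // ltW.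
  apply: le_trans (ler_wpM2l _ hyz) _; first by rewrite invr_ge0 mulr_ge0 // ltW.
  have -> : (3 * N)^-1 * (3 * eps) = eps / N by field; rewrite gt_eqF.
  by [].
have wp : proj i w = w.
  by apply: proj_id; rewrite dotZl dotBl ye dot_proj_e subrr mulr0.
have yw : y = proj i z + (3 * N) *: w.
  by rewrite /w scalerA mulfV ?gt_eqF ?mulr_gt0 // scale1r addrC subrK.
clearbody w.
exists ((1 - (1 - mu)) *: z + (1 - mu) *: (c + w)).
  by apply: Kc => //; apply/andP; split; lra.
rewrite !(projD, projZ) wp.
rewrite yw /mu /lam.
clear Kw wp yw hyz ye.
move: (proj i z) (proj i c) w => Z C W.
by apply/rowP => j; rewrite !mxE; field; rewrite ?gt_eqF // ltr_wpDr // mulr_ge0 // ltW.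
Qed.
End Final.
Section Haus.
Context {R : realType} {d : nat}.
Notation V := 'rV[R]_d.

Lemma haus_mono s (A B : set V) : A `<=` B -> (hausdorff s A <= hausdorff s B)%E.
Proof.
move=> AB; apply: ge_ereal_sup => _ [del del0 <-].
apply: le_trans (ereal_sup_ubound _); last by exists del.
apply: le_ereal_inf => z [C [r [H1 H2 H3 ->]]].
by exists C, r; split => //; apply: subset_trans H3.
Qed.

Lemma haus_lip s (A : set V) (g : V -> V) (L : R) : 0 < L ->
  (forall x y, enorm (g x - g y) <= L * enorm (x - y)) ->
  (hausdorff s (g @` A) <= (L ^+ s)%:E * hausdorff s A)%E.
Proof.
move=> L0 Lg; apply: ge_ereal_sup => _ [del del0 <-].
have dL0 : 0 < del / L by rewrite divr_gt0.
apply: (@le_trans _ _ ((L ^+ s)%:E * hausdorff_delta s (del / L) A)%E); last first.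
  apply: lee_wpmul2l; first by rewrite lee_fin exprn_ge0 // ltW.
  by apply: ereal_sup_ubound; exists (del / L).
rewrite /hausdorff_delta -ereal_inf_pZl ?exprn_gt0 //.
apply: le_ereal_inf => _ [z [C [r [H1 H2 H3 ->]]] <-].
exists (fun n => g @` (C n `&` A)), (fun n => L * r n); split.
- move=> n; have /andP[r0 rd] := H1 n; apply/andP; split; first by rewrite mulr_ge0 // ltW.
  apply: (le_trans (ler_wpM2l (ltW L0) rd)); rewrite mulrC divfK // gt_eqF //.
- move=> n _ _ [x [Cx _] <-] [y [Cy _] <-].
  by apply: (le_trans (Lg x y)); rewrite ler_pM2l // H2.
- move=> _ [a Aa <-]; have [n _ Cna] := H3 a Aa.
  by exists n => //; exists a.
- rewrite -nneseriesZl; last by move=> n _; rewrite lee_fin exprn_ge0 //; have /andP[] := H1 n.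
  by apply: eq_eseriesr => n _; rewrite -EFinM exprMn.
Qed.
End Haus.

Theorem lemma1 (R : realType) (d : nat) :
  exists C : R, 0 < C /\
    forall (K : set 'rV[R]_d) (eps : R),
      convex_body K -> 0 < eps ->
      (forall u : 'rV[R]_d, enorm u = 1 -> eps <= width K u) ->
      forall i : Ipm d,
        (area_lower (Kalpha K i (2 * eps)) i <= C%:E * area K)%E.
Proof.
pose lam : R := 1 + 3 * 24 ^+ d.
pose L : R := (1 + d%:R) * lam.
have lam1 : 1 <= lam by rewrite /lam lerDl mulr_ge0 // exprn_ge0.
have L0 : 0 < L by rewrite /L mulr_gt0 ?ltr_wpDr // (lt_le_trans ltr01).
exists (L ^+ d.-1); split; first by rewrite exprn_gt0.
move=> K eps [Kc Kcl [M KM] [x0 [r r0 hr]]] eps0 Kw i.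
have Kx0 : K x0 by apply: hr; rewrite /eball /= subrr enorm0.
have d0 : (0 < d)%N by case: i => -[j hj] _; apply: leq_ltn_trans hj.
have [c hc] := inball _ _ _ _ Kc KM Kx0 eps0 Kw.
pose H (y : 'rV[R]_d) := proj i c + lam *: (proj i y - proj i c).
pose g (y : 'rV[R]_d) := H y + fgr K i (H y) *: eI R i.
have gL x y : enorm (g x - g y) <= L * enorm (x - y).
  have eH : H x - H y = lam *: proj i (x - y).
    rewrite /H projB; move: (proj i x) (proj i y) (proj i c) => X Y C0.
    by apply/rowP => j; rewrite !mxE; ring.
  rewrite /g opprD addrACA -scalerBl.
  apply: le_trans (enormD _ _) _; rewrite enormZ enorm_e mulr1.
  apply: le_trans (lerD (lexx _) (f_lip _ _ _ i KM Kx0 d0 _ _)) _.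
  rewrite eH enormZ ger0_norm ?(le_trans ler01) // /L.
  have := proj_le i (x - y); have := enorm_ge0 (proj i (x - y)).
  move: (enorm (proj i (x - y))) (enorm (x - y)) => a b ha hb.
  have -> : lam * a + d%:R * (lam * a) = (1 + d%:R) * lam * a by ring.
  apply: ler_wpM2l hb; rewrite mulr_ge0 // ?addr_ge0 //; exact: le_trans ler01 lam1.
have sub : lower_boundary (Kalpha K i (2 * eps)) i `<=` g @` eboundary K.
  move=> x hx; have [ex thick] := LB_graph _ _ _ i KM Kx0 d0 _ _ hx.
  have [z Kz hz] := thick eps eps0.
  have hz3 : enorm (proj i x - proj i z) <= 3 * eps by move: hz; lra.
  have [k' Kk' ek] := hom _ _ _ _ _ _ Kc eps0 hc Kz (dot_proj_e i x) hz3.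
  have [b [bb pb]] := top_point _ _ i _ KM Kk'.
  exists b => //.
  by rewrite /g /H pb -/lam -ek {3}ex.
rewrite /area_lower /area.
apply: le_trans (haus_mono _ _ _ sub) _.
exact: haus_lip _ _ _ _ L0 gL.
Qed.
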